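(* Consider progressive filtering with an ensemble of $M$ selection strategies $s_1,\dots,s_M$, $R$ rounds, $J$ batches per strategy per round, sampling ratio $\alpha\in(0,1)$ and batch size $b$, starting from $\mathcal{C}_0=\mathcal{U}_t$. Let $\mathbf{x}\in\mathcal{U}_t$ be an $\epsilon$-uninformative instance. Then the probability that $\mathbf{x}$ survives all $R$ rounds satisfies $$\Pr(\mathbf{x}\in\mathcal{C}_R)\ \le\ \Big(1-(1-\alpha\epsilon)^{MJ}\Big)^R.$$ Moreover, for $\alpha\epsilon\ll \frac{1}{MJ}$ and large $R$, this probability decreases exponentially as $\mathcal{O}\big((MJ\alpha\epsilon)^R\big)$.
   Context: Setting (pool-based batch active learning). $\mathcal{U}_t$ is a finite unlabeled pool. A selection strategy $s$ is a (possibly randomized) map taking a finite set $\mathcal{P}$ of instances and a batch size $b$ to a subset $s(\mathcal{P},b)\subseteq\mathcal{P}$ of size $b$. Progressive filtering with strategies $s_1,\dots,s_M$, number of rounds $R$, number of batches per strategy $J$, and sampling ratio $\alpha\in(0,1)$ produces pools $\mathcal{C}_0=\mathcal{U}_t\supseteq \mathcal{C}_1\supseteq\dots\supseteq\mathcal{C}_R$ by $$\mathcal{C}_r=\bigcup_{m=1}^M\bigcup_{j=1}^J s_m\big(\mathrm{SubSample}(\mathcal{C}_{r-1},\alpha|\mathcal{C}_{r-1}|),\,b\big),$$ where each $\mathrm{SubSample}(\mathcal{C},n)$ draws $n$ instances of $\mathcal{C}$ uniformly at random without replacement, a fresh independent subsample being drawn for each of the $M\cdot J$ pairs $(m,j)$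 in each round, so that each fixed instance of $\mathcal{C}_{r-1}$ lies in a given subsample with probability $\alpha$, and the $M\cdot J$ draws of a round are independent. For an instance $\mathbf{x}$, let $p_{m,r}(\mathbf{x})$ denote the probability that strategy $s_m$ includes $\mathbf{x}$ in a selected batch during round $r$, given that $\mathbf{x}$ is present in the random subsample. An instance $\mathbf{x}\in\mathcal{U}_t$ is called $\epsilon$-uninformative if for all strategies $s_m$ and all rounds $r$, $p_{m,r}(\mathbf{x})\le\epsilon$. *)

(* Defs.v *)
From HB Require Import structures.
From mathcomp Require Import all_boot all_order all_algebra.
Unset Printing Implicit Defensive.
Import Order.TTheory GRing.Theory Num.Theory.
Local Open Scope ring_scope.

Section PF.
Variables (R : archiRealFieldType) (T : finType).

(* A (possibly randomized) selection strategy: given a finite pool P and a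
   batch size b, [s P b] is a probability mass function on the selected batch,
   supported on subsets of P of size b (of size #|P| when #|P| < b). *)
Definition strategy := {set T} -> nat -> {set T} -> R.

Definition is_strategy (s : strategy) : Prop :=
  forall (P : {set T}) (b : nat),
    (forall B, 0 <= s P b B) /\
    (\sum_(B : {set T}) s P b B = 1) /\
    (forall B, s P b B != 0 -> (B \subset P) /\ #|B| = minn b #|P|).

Definition SubSample (C : {set T}) (n : nat) (A : {set T}) : R :=
  if (A \subset C) && (#|A| == n) then ('C(#|C|, n))%:R^-1 else 0.

Definition ss_size (alpha : R) (C : {set T}) : nat := Num.truncn (alpha * #|C|%:R).

(* For each pair k = (m, j) an independent subsample S_k is drawn
   and s_m selects a batch B_k from it; C' is the union of the B_k. *)
Definition round_step (M J : nat) (s : 'I_M -> strategy) (alpha : R) (b : nat)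
    (C C' : {set T}) : R :=
  \sum_(f : {ffun 'I_M * 'I_J -> {set T} * {set T}}
          | C' == \bigcup_(k : 'I_M * 'I_J) (f k).2)
     \prod_(k : 'I_M * 'I_J)
        (SubSample C (ss_size alpha C) (f k).1 * s k.1 (f k).1 b (f k).2).

Fixpoint pool_dist (M J : nat) (s : 'I_M -> strategy) (alpha : R) (b : nat)
    (U : {set T}) (r : nat) (C' : {set T}) : R :=
  match r with
  | 0 => if C' == U then 1 else 0
  | r'.+1 => \sum_(C : {set T}) pool_dist M J s alpha b U r' C * round_step M J s alpha b C C'
  end.

Definition prob_in_pool (M J : nat) (s : 'I_M -> strategy) (alpha : R) (b : nat)
    (U : {set T}) (r : nat) (x : T) : R :=
  \sum_(C : {set T} | x \in C) pool_dist M J s alpha b U r C.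

(* p_{m,r}(x) conditioned on the current pool C_{r-1} = C: probability that
   s_m includes x in its batch, given that x lies in the random subsample of C.
   (Conditional probability with the convention 0/0 = 0.) *)
Definition p_sel (s : strategy) (alpha : R) (b : nat) (C : {set T}) (x : T) : R :=
  (\sum_(S : {set T} | x \in S)
      SubSample C (ss_size alpha C) S * \sum_(B : {set T} | x \in B) s S b B)
  / (\sum_(S : {set T} | x \in S) SubSample C (ss_size alpha C) S).

(* x is eps-uninformative: for all strategies m and all rounds r = 1..nR,
   p_{m,r}(x) <= eps, for every pool C_{r-1} that occurs with positive
   probability (i.e. conditionally on the history of the process). *)
Definition eps_uninformative (M J : nat) (s : 'I_M -> strategy) (alpha : R)
    (b : nat) (U : {set T}) (nR : nat) (eps : R) (x : T) : Prop :=
  forall (m : 'I_M) (r : nat), (r < nR)%N ->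
    forall C : {set T}, 0 < pool_dist M J s alpha b U r C ->
      p_sel (s m) alpha b C x <= eps.

End PF.

(* Main.v *)
Require Import Defs.
From HB Require Import structures.
From mathcomp Require Import all_boot all_order all_algebra.
From mathcomp Require Import ring lra.
Import Order.TTheory GRing.Theory Num.Theory.
Local Open Scope ring_scope.

Lemma prod_seq_bound (R : realDomainType) (I : Type) (r : seq I) (c q : I -> R) (be : R) :
  0 <= be <= 1 ->
  (forall i, 0 <= c i) -> (forall i, 0 <= q i <= be) -> (forall i, c i + q i <= 1) ->
  0 <= \prod_(i <- r) c i <= \prod_(i <- r) (c i + q i) /\
  \prod_(i <- r) (c i + q i) <= 1 /\
  \prod_(i <- r) (c i + q i) - \prod_(i <- r) c i <= 1 - (1 - be) ^+ size r.
Proof.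
move=> /andP[be0 be1] c0 qb cq1.
elim: r => [|i r [/andP[Q0 QP] [P1 IH]]]; first by rewrite !big_nil /= expr0 subrr lexx ler01.
have /andP[q0 qbe] := qb i.
rewrite !big_cons /=.
have ci1 : c i <= 1 - q i by rewrite lerBrDr.
split; first by rewrite mulr_ge0 //= ler_pM // ?lerDl.
split; first by rewrite mulr_ile1 // ?addr_ge0 // (le_trans Q0 QP).
have D0 : 0 <= \prod_(j <- r) (c j + q j) - \prod_(j <- r) c j by rewrite subr_ge0.
have hbe : 0 <= (1 - be) ^+ size r by rewrite exprn_ge0 // subr_ge0.
have hbe1 : (1 - be) ^+ size r <= 1 by rewrite exprn_ile1 // ?subr_ge0 // lerBlDr lerDl.
set P := \prod_(j <- r) (c j + q j) in Q0 QP P1 IH D0 *.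
set Q := \prod_(j <- r) c j in Q0 QP IH D0 *.
set D := 1 - (1 - be) ^+ size r in IH *.
have e : (c i + q i) * P - c i * Q = c i * (P - Q) + q i * P by ring.
rewrite e exprS.
apply: (@le_trans _ _ ((1 - q i) * D + q i)).
  apply: lerD; first by apply: ler_pM.
  by rewrite -[leRHS]mulr1 ler_wpM2l.
have -> : (1 - q i) * D + q i = 1 - (1 - q i) * (1 - D) by ring.
rewrite lerB //.
have -> : 1 - D = (1 - be) ^+ size r by rewrite /D opprB addrC subrK.
by apply: ler_wpM2r => //; rewrite lerB.
Qed.

Section L.
Variables (R : archiRealFieldType) (T : finType).

Lemma SS_ge0 (C : {set T}) n A : 0 <= @SubSample R T C n A.
Proof. by rewrite /SubSample; case: ifP => // _; rewrite invr_ge0 ler0n. Qed.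

Lemma SS_sumP (C : {set T}) n (P : pred {set T}) :
  \sum_(S | P S) @SubSample R T C n S =
  #|[set S : {set T} | P S && ((S \subset C) && (#|S| == n))]|%:R * ('C(#|C|, n))%:R^-1.
Proof.
rewrite /SubSample -big_mkcondr /=.
rewrite (eq_bigl (fun S => S \in [set S : {set T} | P S && ((S \subset C) && (#|S| == n))])); last first.
  by move=> S; rewrite inE.
by rewrite sumr_const mulr_natl.
Qed.

Lemma SS_sum1 (C : {set T}) n : \sum_S @SubSample R T C n S <= 1.
Proof.
rewrite (SS_sumP C n (fun _ => true)).
have -> : [set S : {set T} | true && ((S \subset C) && (#|S| == n))] = [set S : {set T} | S \subset C & #|S| == n].
  by apply/setP => S; rewrite !inE.
rewrite cards_draws.
have [->|nz] := eqVneq ('C(#|C|, n))%:R (0:R); first by rewrite mul0r ler01.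
by rewrite mulfV.
Qed.

Lemma card_Dx (C : {set T}) n x : x \in C ->
  (#|[set S : {set T} | (x \in S) && ((S \subset C) && (#|S| == n))]| * #|C| = n * 'C(#|C|, n))%N.
Proof.
move=> xC.
have h := cardsID [set S : {set T} | x \in S] [set S : {set T} | S \subset C & #|S| == n].
have e1 : [set S : {set T} | S \subset C & #|S| == n] :&: [set S : {set T} | x \in S] =
   [set S : {set T} | (x \in S) && ((S \subset C) && (#|S| == n))].
  by apply/setP => S; rewrite !inE andbC.
have e2 : [set S : {set T} | S \subset C & #|S| == n] :\: [set S : {set T} | x \in S] =
   [set S : {set T} | S \subset C :\ x & #|S| == n].
  apply/setP => S; rewrite !inE subsetD1. by case: (S \subset C); case: (x \in S); case: (#|S| == n).
rewrite e1 e2 !cards_draws in h; clear e1 e2.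
move: h; rewrite (cardsD1 x C) xC /=.
case: n => [|n'].
  rewrite !bin0 addn1 => -[->]; by rewrite mul0n.
rewrite add1n binS addnC => /addnI ->.
by rewrite -binS mulnC (mul_bin_diag #|C :\ x|.+1 n').
Qed.
Lemma den_le (C : {set T}) (x : T) (alpha : R) : 0 < alpha ->
  \sum_(S : {set T} | x \in S) @SubSample R T C (ss_size R T alpha C) S <= (if x \in C then alpha else 0).
Proof.
move=> a0; rewrite SS_sumP.
set n := ss_size R T alpha C.
case: ifP => xC; last first.
  have -> : [set S : {set T} | (x \in S) && ((S \subset C) && (#|S| == n))] = set0.
    apply/setP => S; rewrite !inE; case xS: (x \in S) => //=.
    by apply/negP => /andP[/subsetP h _]; rewrite (h _ xS) in xC.
  by rewrite cards0 mul0r.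
have key := @card_Dx C n x xC.
have [K0|Knz] := eqVneq ('C(#|C|, n))%:R (0:R); first by rewrite K0 invr0 mulr0 ltW.
have hc : (0:R) < #|C|%:R by rewrite ltr0n (cardsD1 x C) xC.
rewrite -(ler_pM2r hc) -mulrA mulrC -mulrA -natrM mulnC key natrM mulrC -mulrA divff // mulr1.
by rewrite /n /ss_size truncn_le mulr_ge0 // ?ltW.
Qed.
Lemma q_eq (st : strategy R T) (Hs : is_strategy R T st) (C : {set T}) n b (x : T) :
  \sum_(p : {set T} * {set T} | x \in p.2) SubSample R T C n p.1 * st p.1 b p.2 =
  \sum_(S : {set T} | x \in S) SubSample R T C n S * \sum_(B : {set T} | x \in B) st S b B.
Proof.
rewrite (eq_bigl (fun p : {set T} * {set T} => true && (x \in p.2))) //.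
rewrite -(pair_big_dep xpredT (fun _ (B : {set T}) => x \in B) (fun S B => SubSample R T C n S * st S b B)) /=.
rewrite (bigID (fun S : {set T} => x \in S)) /=.
rewrite [X in _ + X]big1 ?addr0; last first.
  move=> S xS; apply: big1 => B xB.
  have [->|nz] := eqVneq (st S b B) 0; first by rewrite mulr0.
  have [_ [_ /(_ B nz) [/subsetP h _]]] := Hs S b.
  by rewrite (h _ xB) in xS.
by apply: eq_bigr => S _; rewrite mulr_sumr.
Qed.

Lemma inner_le1 (st : strategy R T) (Hs : is_strategy R T st) S b (x : T) :
  0 <= \sum_(B : {set T} | x \in B) st S b B <= 1.
Proof.
have [h0 [h1 _]] := Hs S b.
rewrite sumr_ge0 //= -h1 [leRHS](bigID (fun B : {set T} => x \in B)) /= lerDl.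
by rewrite sumr_ge0.
Qed.

Lemma q_le (st : strategy R T) (Hs : is_strategy R T st) (C : {set T}) b (x : T) (alpha eps : R) :
  0 < alpha -> 0 <= eps -> p_sel R T st alpha b C x <= eps ->
  \sum_(p : {set T} * {set T} | x \in p.2) SubSample R T C (ss_size R T alpha C) p.1 * st p.1 b p.2
   <= eps * (if x \in C then alpha else 0).
Proof.
move=> a0 e0; rewrite q_eq // /p_sel.
set num := \sum_(S : {set T} | x \in S) _.
set den := \sum_(S : {set T} | x \in S) _.
move=> hp.
have nd : num <= den.
  apply: ler_sum => S _; rewrite -[leRHS]mulr1 ler_wpM2l ?SS_ge0 //.
  by case/andP: (@inner_le1 st Hs S b x).
have d0 : 0 <= den by apply: sumr_ge0 => S _; exact: SS_ge0.
apply: (@le_trans _ _ (eps * den)); last by rewrite ler_wpM2l // den_le.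
have [dz|dnz] := eqVneq den 0; first by rewrite dz mulr0 -dz.
by rewrite -ler_pdivrMr ?lt_def ?dnz.
Qed.

Lemma tot_le (st : strategy R T) (Hs : is_strategy R T st) (C : {set T}) n b :
  \sum_(p : {set T} * {set T}) SubSample R T C n p.1 * st p.1 b p.2 <= 1.
Proof.
rewrite -(pair_bigA _ (fun S B => SubSample R T C n S * st S b B)) /=.
apply: le_trans (SS_sum1 C n); apply: ler_sum => S _.
rewrite -mulr_sumr; have [_ [-> _]] := Hs S b; by rewrite mulr1.
Qed.
Lemma round_x (M J : nat) (s : 'I_M -> strategy R T) (alpha : R) b (C : {set T}) (x : T) :
  let w := fun (k : 'I_M * 'I_J) (p : {set T} * {set T}) =>
     SubSample R T C (ss_size R T alpha C) p.1 * s k.1 p.1 b p.2 in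
  \sum_(C' : {set T} | x \in C') round_step R T M J s alpha b C C' =
  \prod_(k : 'I_M * 'I_J) (\sum_(p : {set T} * {set T} | x \notin p.2) w k p + \sum_(p : {set T} * {set T} | x \in p.2) w k p)
   - \prod_(k : 'I_M * 'I_J) \sum_(p : {set T} * {set T} | x \notin p.2) w k p.
Proof.
move=> w; rewrite /round_step.
set U := fun f : {ffun 'I_M * 'I_J -> {set T} * {set T}} => \bigcup_(k : 'I_M * 'I_J) (f k).2.
set F := fun f : {ffun 'I_M * 'I_J -> {set T} * {set T}} => \prod_(k : 'I_M * 'I_J) w k (f k).
have E1 : \sum_(f | x \in U f) F f =
    \sum_(C' : {set T} | x \in C') \sum_(f | C' == U f) F f.
  rewrite (partition_big U (fun C' => x \in C')) //.
  apply: eq_bigr => C' xC'; apply: eq_bigl => f.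
  rewrite eq_sym; case: eqP => [<-|_]; by rewrite ?xC' ?andbF.
rewrite -E1.
have E2 : \sum_f F f = \prod_k \sum_p w k p := esym (bigA_distr_bigA w).
have E3 : \sum_(f | x \notin U f) F f = \prod_k \sum_(p : {set T} * {set T} | x \notin p.2) w k p.
  rewrite (bigA_distr_big (fun p : {set T} * {set T} => x \notin p.2) w).
  apply: eq_bigl => f; apply/idP/idP.
    move=> xU; apply/ffun_onP => k; apply: contra xU => xk.
    by apply/bigcupP; exists k.
  move/ffun_onP => h; apply/negP => /bigcupP [k _ xk].
  by move: (h k) => /negP; apply.
have E4 : \sum_f F f = \sum_(f | x \in U f) F f + \sum_(f | x \notin U f) F f := bigID _ _ _.
rewrite -E3 [X in X - _](_ : _ = \sum_f F f); first by rewrite E4 addrK.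
rewrite E2; apply: eq_bigr => k _.
by rewrite [RHS](bigID (fun p : {set T} * {set T} => x \in p.2)) addrC.
Qed.
Lemma step_le (M J : nat) (s : 'I_M -> strategy R T) (alpha eps : R) b (C : {set T}) (x : T) :
  (forall m, is_strategy R T (s m)) -> 0 < alpha < 1 -> 0 <= eps <= 1 ->
  (forall m, p_sel R T (s m) alpha b C x <= eps) ->
  \sum_(C' : {set T} | x \in C') round_step R T M J s alpha b C C' <=
  (if x \in C then 1 - (1 - alpha * eps) ^+ (M * J) else 0).
Proof.
move=> Hs /andP[a0 a1] /andP[e0 e1] hp.
rewrite round_x.
set w := fun (k : 'I_M * 'I_J) (p : {set T} * {set T}) =>
     SubSample R T C (ss_size R T alpha C) p.1 * s k.1 p.1 b p.2.
set be := eps * (if x \in C then alpha else 0).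
have w0 : forall k p, 0 <= w k p.
  move=> k p; rewrite /w mulr_ge0 ?SS_ge0 //.
  by have [h _] := Hs k.1 p.1 b; apply: h.
have hb : 0 <= be <= 1.
  rewrite /be; case: ifP => _; last by rewrite mulr0 lexx ler01.
  rewrite mulr_ge0 ?(ltW a0) //=; apply: mulr_ile1 => //; exact: ltW.
have hc : forall k : ('I_M * 'I_J)%type, 0 <= \sum_(p : {set T} * {set T} | x \notin p.2) w k p.
  by move=> k; apply: sumr_ge0 => p _; apply: w0.
have hq : forall k : ('I_M * 'I_J)%type, 0 <= \sum_(p : {set T} * {set T} | x \in p.2) w k p <= be.
  move=> k; apply/andP; split; first by apply: sumr_ge0 => p _; apply: w0.
  exact: (@q_le (s k.1) (Hs k.1) C b x alpha eps a0 e0 (hp k.1)).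
have hcq : forall k : ('I_M * 'I_J)%type, \sum_(p : {set T} * {set T} | x \notin p.2) w k p + \sum_(p : {set T} * {set T} | x \in p.2) w k p <= 1.
  move=> k; apply: le_trans (@tot_le (s k.1) (Hs k.1) C (ss_size R T alpha C) b).
  by rewrite [leRHS](bigID (fun p : {set T} * {set T} => x \in p.2)) /= addrC.
have [_ [_ H]] := @prod_seq_bound R _ (index_enum ('I_M * 'I_J)%type) _ _ be hb hc hq hcq.
have sz : size (index_enum ('I_M * 'I_J)%type) = (M * J)%N.
  by have := card_prod 'I_M 'I_J; rewrite !card_ord cardT enumT => <-.
move: H; rewrite sz => H.
apply: (le_trans H).
rewrite /be; case: ifP => _; first by rewrite mulrC.
by rewrite mulr0 subr0 expr1n subrr.
Qed.

Lemma bern (be : R) n : 0 <= be <= 1 -> 1 - (1 - be) ^+ n <= n%:R * be.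
Proof.
move=> /andP[b0 b1]; elim: n => [|n IH]; first by rewrite expr0 subrr mul0r.
have t0 : 0 <= (1 - be) ^+ n by rewrite exprn_ge0 // subr_ge0.
have t1 : (1 - be) ^+ n <= 1 by rewrite exprn_ile1 // ?subr_ge0 // lerBlDr lerDl.
rewrite exprS -natr1 mulrDl mul1r.
set t := (1 - be) ^+ n in t0 t1 IH *.
have : be * t <= be by rewrite -[leRHS]mulr1 ler_wpM2l.
lra.
Qed.
Lemma pd_ge0 (M J : nat) (s : 'I_M -> strategy R T) (alpha : R) b (U : {set T}) r C :
  (forall m, is_strategy R T (s m)) -> 0 <= pool_dist R T M J s alpha b U r C.
Proof.
move=> Hs; elim: r C => [|r IH] C /=; first by case: ifP.
apply: sumr_ge0 => C0 _; rewrite mulr_ge0 //.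
apply: sumr_ge0 => f _; apply: prodr_ge0 => k _; rewrite mulr_ge0 ?SS_ge0 //.
by have [h _] := Hs k.1 (f k).1 b; apply: h.
Qed.
End L.

Theorem theorem2 (R : archiRealFieldType) (T : finType) (M J nR b : nat)
    (alpha eps : R) (s : 'I_M -> strategy R T) (U : {set T}) (x : T) :
  0 < alpha < 1 ->
  0 <= eps <= 1 ->
  (forall m, @is_strategy R T (s m)) ->
  x \in U ->
  @eps_uninformative R T M J s alpha b U nR eps x ->
  @prob_in_pool R T M J s alpha b U nR x
    <= (1 - (1 - alpha * eps) ^+ (M * J)) ^+ nR
  /\ @prob_in_pool R T M J s alpha b U nR x
    <= ((M * J)%:R * alpha * eps) ^+ nR.
Proof.
move=> ha he Hs xU Hun.
have /andP[a0 a1] := ha; have /andP[e0 e1] := he.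
have hb : 0 <= alpha * eps <= 1.
  rewrite mulr_ge0 ?(ltW a0) //=; apply: mulr_ile1 => //; exact: ltW.
have /andP[hb0 hb1] := hb.
set rho := 1 - (1 - alpha * eps) ^+ (M * J).
have rho0 : 0 <= rho.
  by rewrite /rho subr_ge0 exprn_ile1 // ?subr_ge0 // lerBlDr lerDl.
have main : forall r, (r <= nR)%N -> prob_in_pool R T M J s alpha b U r x <= rho ^+ r.
  elim => [_|r IH hr].
    rewrite /prob_in_pool /= (bigD1 U) //= eqxx big1 ?addr0 ?expr0 //.
    by move=> C /andP[_ /negbTE ->].
  rewrite /prob_in_pool /= exchange_big /=.
  apply: (@le_trans _ _ (\sum_C pool_dist R T M J s alpha b U r C *
                                (if x \in C then rho else 0))).
    apply: ler_sum => C _; rewrite -mulr_sumr.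
    have [pz|pnz] := eqVneq (pool_dist R T M J s alpha b U r C) 0.
      by rewrite pz !mul0r.
    have pp : 0 < pool_dist R T M J s alpha b U r C by rewrite lt_def pnz pd_ge0.
    rewrite ler_wpM2l ?pd_ge0 // step_le // => m.
    exact: (Hun m r hr C pp).
  rewrite (eq_bigr (fun C : {set T} => if x \in C then pool_dist R T M J s alpha b U r C * rho else 0)); last first.
    by move=> C _; case: ifP => _; rewrite ?mulr0.
  rewrite -big_mkcond /= -mulr_suml exprS mulrC ler_wpM2l //.
  exact: IH (ltnW hr).
have H1 := main nR (leqnn nR).
split => //; apply: le_trans H1 _.
apply: lerXn2r; rewrite ?nnegrE //.
  by rewrite mulr_ge0 ?mulr_ge0 ?ler0n ?(ltW a0).
by rewrite -mulrA; apply: bern.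
Qed.
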